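(* Let $p$ be a prime, $h\in\mathbb{Z}[x]$ monic, and $m\in\mathbb{Z}_p$. Then: (1) $\widehat\chi_t^{(h)}(m)$ is a nonnegative integer for every real $t>0$; (2) $\widehat\chi_t^{(h)}(m)$ is nonincreasing in $t$; (3) $v_p(h(m))=\int_0^\infty\chi_t^{(h)}(m)\,dt=\sum_{t=1}^\infty\widehat\chi_t^{(h)}(m)$ (as elements of $[0,\infty]$).
   Context: $v_p$ is the $p$-adic valuation extended to $\overline{\mathbb{Q}_p}$. For monic $h=\prod_i(x-\delta_i)$ over $\overline{\mathbb{Q}_p}$ (roots with multiplicity), $m\in\mathbb{Z}_p$, $t\ge0$: $\chi_t^{(h)}(m)=\#\{i:v_p(m-\delta_i)\ge t\}$, and for real $t>0$, $\widehat\chi_t^{(h)}(m)=\int_{\lceil t\rceil-1}^{\lceil t\rceil}\chi_s^{(h)}(m)\,ds$. *)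

(* Defs.v *)
From HB Require Import structures.
From mathcomp Require Import all_boot all_order all_algebra.
From mathcomp Require Import all_classical all_reals all_analysis.
Set Implicit Arguments. Unset Strict Implicit. Unset Printing Implicit Defensive.
Import Order.TTheory GRing.Theory Num.Theory.
Local Open Scope ring_scope.
Local Open Scope classical_set_scope.

(* Axiomatic description of (Qbar_p, v_p) together with the subfield Q_p:
   K is an algebraically closed field, v : K -> \bar R a valuation
   (v x = +oo iff x = 0), Qp a subfield of K over which K is algebraic,
   Qp is complete for v, v(Qp^x) is contained in Z, v(p) = 1 and the
   residue field of Qp is represented by the integers.  Any such data is
   isomorphic to (\overline{Q_p}, v_p, Q_p). *)
Definition is_padic_closure (p : nat) (R : realType) (K : closedFieldType)
    (v : K -> \bar R) (Qp : {pred K}) : Prop :=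
  [/\
      [/\ v 0 = +oo%E,
      (forall x : K, x != 0 -> exists r : R, v x = r%:E),
      (forall x y : K, v (x * y) = (v x + v y)%E) &
      (forall x y : K, (Order.min (v x) (v y) <= v (x + y)%R)%E)],
      [/\ 0 \in Qp, 1 \in Qp,
          (forall x y, x \in Qp -> y \in Qp -> x - y \in Qp),
          (forall x y, x \in Qp -> y \in Qp -> x * y \in Qp) &
          (forall x, x \in Qp -> x^-1 \in Qp)],
      (forall x : K, exists q : {poly K},
          [/\ q != 0, q \is a polyOver Qp & root q x]) &
      [/\
          (forall x, x \in Qp -> x != 0 -> exists n : int, v x = (n%:~R : R)%:E),
          v p%:R = 1%E,
          (* residue field of Qp is given by the integers *)
          (forall x, x \in Qp -> (0 <= v x)%E ->
              exists n : nat, (1 <= v (x - n%:R)%R)%E) &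
          (forall u : nat -> K, (forall n, u n \in Qp) ->
             (forall M : R, exists N : nat, forall i j : nat, (N <= i)%N -> (N <= j)%N ->
                 (M%:E <= v (u i - u j)%R)%E) ->
             exists2 l, l \in Qp &
               forall M : R, exists N : nat, forall n : nat, (N <= n)%N ->
                 (M%:E <= v (u n - l)%R)%E)]].

(* chi_t^{(h)}(m) = #{ i : v(m - delta_i) >= t }, for the root list rs of h *)
Definition chi (R : realType) (K : fieldType) (v : K -> \bar R)
    (rs : seq K) (m : K) (t : R) : nat :=
  count (fun d => (t%:E <= v (m - d)%R)%E) rs.

Definition chihat (R : realType) (K : fieldType) (v : K -> \bar R)
    (rs : seq K) (m : K) (t : R) : \bar R :=
  (\int[@lebesgue_measure R]_(s in `[((Num.ceil t - 1)%:~R : R), (Num.ceil t)%:~R])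
      ((chi v rs m s)%:R : R)%:E)%E.

(* Main.v *)
Require Import Defs.
From HB Require Import structures.
From mathcomp Require Import all_boot all_order all_algebra.
From mathcomp Require Import all_classical all_reals all_analysis.
From mathcomp Require Import lra zify.
Import Order.TTheory GRing.Theory Num.Theory.
Local Open Scope ring_scope.
Local Open Scope classical_set_scope.

Section M.
Context {R : realType}.

Definition Aset (a : \bar R) : set R := [set s | (s%:E <= a)%E].

Definition cc (a : \bar R) (x : R) : R :=
  match a with
  | r%:E => if r <= x - 1 then 0 else if r <= x then r - (x - 1) else 1
  | +oo%E => 1
  | -oo%E => 0
  end.

Lemma Aset_meas a : measurable (Aset a).
Proof.
case: a => [r||].
- have -> : Aset r%:E = `]-oo, r] by rewrite /Aset; apply/seteqP; split => s /=; rewrite in_itv /= lee_fin.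
  exact: measurable_itv.
- have -> : Aset +oo = setT by rewrite /Aset; apply/seteqP; split => s //= _; rewrite leey.
  exact: measurableT.
- have -> : Aset -oo = set0 by rewrite /Aset; apply/seteqP; split => s //=; rewrite leeNy_eq.
  exact: measurable0.
Qed.

Lemma meas_cc (a : \bar R) (x : R) :
  lebesgue_measure (Aset a `&` `[x - 1, x]) = (cc a x)%:E.
Proof.
case: a => [r||] /=.
- have [h1|h1] := lerP r (x - 1).
  + have [->|ne] := eqVneq r (x - 1).
    * have -> : Aset (x-1)%:E `&` `[x - 1, x] = `[x-1, x-1].
        rewrite /Aset; apply/seteqP; split => s /=; rewrite !in_itv /= lee_fin.
        by move=> [h /andP[h2 h3]]; rewrite h h2.
        by move=> /andP[h2 h3]; rewrite h3 h2 (le_trans h3) //; lra.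
      by rewrite lebesgue_measure_itv /= ltxx.
    have -> : Aset r%:E `&` `[x - 1, x] = set0.
      rewrite /Aset; apply/seteqP; split => s //=; rewrite !in_itv /= lee_fin.
      move=> [h /andP[h2 h3]]; have : r < x - 1 by rewrite lt_neqAle ne h1.
      lra.
    by rewrite measure0.
  + have [h2|h2] := lerP r x.
    * have -> : Aset r%:E `&` `[x - 1, x] = `[x-1, r].
        rewrite /Aset; apply/seteqP; split => s /=; rewrite !in_itv /= lee_fin.
        by move=> [h /andP[h3 h4]]; rewrite h h3.
        by move=> /andP[h3 h4]; rewrite h4 h3 (le_trans h4 h2).
      by rewrite lebesgue_measure_itv /= lte_fin h1 EFinB EFinN.
    * have -> : Aset r%:E `&` `[x - 1, x] = `[x-1, x].
        rewrite /Aset; apply/seteqP; split => s /=; rewrite !in_itv /= lee_fin.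
        by move=> [h /andP[h3 h4]]; rewrite h4 h3.
        by move=> /andP[h3 h4]; rewrite h4 h3 (le_trans h4) // ltW.
      rewrite lebesgue_measure_itv /= lte_fin ifT; last lra.
      by rewrite -EFinB; congr (_%:E); lra.
- have -> : Aset +oo `&` `[x - 1, x] = `[x-1, x].
    by rewrite /Aset; apply/seteqP; split => s /=; [case|]; rewrite ?leey.
  rewrite lebesgue_measure_itv /= lte_fin ifT; last lra.
  by rewrite -EFinB; congr (_%:E); lra.
- have -> : Aset -oo `&` `[x - 1, x] = set0.
    by rewrite /Aset; apply/seteqP; split => s //=; rewrite leeNy_eq; case.
  by rewrite measure0.
Qed.

Lemma meas_inf (a : \bar R) : (0 <= a)%E ->
  lebesgue_measure (Aset a `&` `[0, +oo[) = a.
Proof.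
case: a => [r||] //= r0.
- have -> : Aset r%:E `&` `[0, +oo[ = `[0, r].
    rewrite /Aset; apply/seteqP; split => s /=; rewrite !in_itv /= lee_fin ?andbT.
    by move=> [h h2]; rewrite h h2.
    by move=> /andP[h3 h4].
  rewrite lebesgue_measure_itv /= lte_fin.
  have [->|ne] := eqVneq r 0; first by rewrite ltxx.
  rewrite ifT ?oppr0 ?adde0 //; by rewrite lt_neqAle eq_sym ne -lee_fin.
- have -> : Aset +oo `&` `[0, +oo[ = `[0, +oo[.
    by rewrite /Aset; apply/seteqP; split => s /=; [case|]; rewrite ?leey.
  by rewrite lebesgue_measure_itv /= ltry.
Qed.
End M.


Lemma count_ind {R : realType} (I : Type) (rs : seq I) (a : I -> \bar R) (s : R) :
  ((count (fun d => (s%:E <= a d)%E) rs)%:R : R)%:E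
  = (\sum_(d <- rs) (\1_(Aset (a d)) s)%:E)%E.
Proof.
elim: rs => [|d rs IH]; first by rewrite big_nil.
rewrite big_cons /= natrD EFinD IH indicE; congr (_ + _)%E.
have [h|h] := boolP (s%:E <= a d)%E; [rewrite mem_set|rewrite memNset] => //=; exact/negP.
Qed.

Lemma int_count {R : realType} (I : Type) (rs : seq I) (a : I -> \bar R)
  (D : set R) (mD : measurable D) :
  (\int[@lebesgue_measure R]_(s in D) ((count (fun d => (s%:E <= a d)%E) rs)%:R : R)%:E
  = \sum_(d <- rs) lebesgue_measure (Aset (a d) `&` D))%E.
Proof.
under eq_integral do rewrite count_ind.
rewrite ge0_integral_sum //.
- by apply: eq_bigr => d _; rewrite integral_indic //; exact: Aset_meas.
- move=> d; apply/measurable_realfun.measurable_EFinP; apply: measurable_realfun.measurable_indic; exact: Aset_meas.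
Qed.


Section Val.
Context {R : realType} {K : fieldType} (v : K -> \bar R).
Hypothesis v0 : v 0 = +oo%E.
Hypothesis vfin : forall x : K, x != 0 -> exists r : R, v x = r%:E.
Hypothesis vM : forall x y : K, v (x * y) = (v x + v y)%E.
Hypothesis vD : forall x y : K, (Order.min (v x) (v y) <= v (x + y)%R)%E.

Lemma vNy x : v x != -oo%E.
Proof. by have [->|/(vfin _)[r ->]] := eqVneq x 0; rewrite ?v0. Qed.

Lemma vfin_eq0 x : v x = +oo%E -> x = 0.
Proof. by have [//|/(vfin _)[r ->]] := eqVneq x 0. Qed.

Lemma v1 : v 1 = 0%E.
Proof.
have [r hr] := vfin _ (oner_neq0 K).
have := vM 1 1; rewrite mulr1 hr -EFinD => -[h].
by congr (_%:E); lra.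
Qed.

Lemma vNone : v (-1) = 0%E.
Proof.
have n1 : (-1 : K) != 0 by rewrite oppr_eq0 oner_neq0.
have [r hr] := vfin _ n1.
have := vM (-1) (-1); rewrite mulrNN mulr1 v1 hr -EFinD => -[h].
by congr (_%:E); lra.
Qed.

Lemma vN x : v (- x) = v x.
Proof. by rewrite -mulN1r vM vNone add0e. Qed.

Lemma vB x y : (Order.min (v x) (v y) <= v (x - y)%R)%E.
Proof. by rewrite -(vN y) vD. Qed.

Lemma vge x y c : (c <= v x)%E -> (c <= v y)%E -> (c <= v (x + y))%E.
Proof.
move=> hx hy; apply: le_trans (vD x y).
by rewrite /Order.min; case: ifP.
Qed.

Lemma vgt x y c : (c < v x)%E -> (c < v y)%E -> (c < v (x + y))%E.
Proof.
move=> hx hy; apply: lt_le_trans (vD x y).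
by rewrite /Order.min; case: ifP.
Qed.

Lemma vstrict x y : (v x < v y)%E -> v (x + y) = v x.
Proof.
move=> hxy; apply/eqP; rewrite eq_le; apply/andP; split; last first.
  by apply: le_trans (vD x y); rewrite /Order.min hxy.
have := vB (x + y) y; rewrite addrK /Order.min.
case: ifP => // /negbT; rewrite -leNgt => h1 h2.
by have := le_lt_trans h2 hxy; rewrite ltxx.
Qed.

Lemma vsum_ge (I : Type) (s : seq I) (F : I -> K) c :
  (forall i, (c <= v (F i))%E) -> (c <= v (\sum_(i <- s) F i))%E.
Proof.
move=> h; apply: (big_ind (fun x => c <= v x)%E) => //.
- by rewrite v0 leey.
- by move=> x y; apply: vge.
Qed.

Lemma vsum_gt (I : Type) (s : seq I) (P : pred I) (F : I -> K) c :
  c != +oo%E ->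
  (forall i, P i -> (c < v (F i))%E) -> (c < v (\sum_(i <- s | P i) F i))%E.
Proof.
move=> cf h; apply: (big_ind (fun x => c < v x)%E) => //.
- by rewrite v0 ltey.
- by move=> x y; apply: vgt.
Qed.

Lemma vprod (I : Type) (s : seq I) (F : I -> K) :
  v (\prod_(i <- s) F i) = (\sum_(i <- s) v (F i))%E.
Proof.
elim: s => [|i s IH]; first by rewrite !big_nil v1.
by rewrite !big_cons vM IH.
Qed.

Lemma vexp x r n : v x = r%:E -> v (x ^+ n) = (n%:R * r)%:E.
Proof.
move=> hx; elim: n => [|n IH]; first by rewrite expr0 v1 mul0r.
by rewrite exprSr vM IH hx -EFinD -natr1 mulrDl mul1r.
Qed.

Definition gn (f : {poly K}) (r : R) :=
  (forall j, r%:E <= v f`_j)%E /\ (exists j, v f`_j = r%:E).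

Lemma gn_uniq f r s : gn f r -> gn f s -> r = s.
Proof.
move=> [h1 [j1 e1]] [h2 [j2 e2]].
have := h1 j2; have := h2 j1; rewrite e1 e2 !lee_fin => a b.
by apply/eqP; rewrite eq_le a b.
Qed.

Lemma gnM f g a b : gn f a -> gn g b -> gn (f * g) (a + b).
Proof.
move=> [fa ex_f] [gb ex_g]; split.
  move=> n; rewrite coefM EFinD; apply: vsum_ge => i.
  by rewrite vM; apply: leeD.
have ex_f' : exists j, v f`_j == a%:E by case: ex_f => j /eqP; exists j.
have ex_g' : exists j, v g`_j == b%:E by case: ex_g => j /eqP; exists j.
case: (ex_minnP ex_f') => j0 /eqP hj0 minj0.
case: (ex_minnP ex_g') => l0 /eqP hl0 minl0.
exists (j0 + l0)%N; rewrite coefM.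
have lt0 : (j0 < (j0 + l0).+1)%N by rewrite ltnS leq_addr.
rewrite (bigD1 (Ordinal lt0)) //= addKn vstrict; first by rewrite vM hj0 hl0 EFinD.
rewrite vM hj0 hl0 -EFinD; apply: vsum_gt => // i hi.
have ne : (i : nat) != j0 by apply: contra hi => /eqP e; apply/eqP/val_inj.
rewrite vM EFinD.
have [lti|gti] := ltnP i j0.
- apply: lte_leD => //.
  rewrite lt_neqAle fa andbT; apply/negP => /eqP e.
  by have := minj0 i (introT eqP (esym e)); rewrite leqNgt lti.
- have gti' : (j0 < i)%N by rewrite ltn_neqAle eq_sym ne gti.
  rewrite addeC [X in (_ < X)%E]addeC; apply: lte_leD => //.
  rewrite lt_neqAle gb andbT; apply/negP => /eqP e.
  have := minl0 _ (introT eqP (esym e)).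
  have := ltn_ord i; rewrite ltnS => hi2.
  apply/negP; rewrite -ltnNge; lia.
Qed.

Lemma gn1 : gn 1 0.
Proof.
split; last by exists 0%N; rewrite coef1 /= v1.
by move=> j; rewrite coef1; case: (j == 0)%N; rewrite /= ?v1 // v0 leey.
Qed.

Lemma gn_prod (I : Type) (s : seq I) (F : I -> {poly K}) (r : I -> R) :
  (forall i, gn (F i) (r i)) -> gn (\prod_(i <- s) F i) (\sum_(i <- s) r i).
Proof.
move=> h; elim: s => [|i s IH]; first by rewrite !big_nil; exact: gn1.
by rewrite !big_cons; apply: gnM.
Qed.

Definition mn (a : \bar R) (x : R) : R := if (a <= x%:E)%E then fine a else x.

Lemma gn_lin c1 c0 (k : R) : v c1 = k%:E ->
  gn (c1 *: 'X + c0%:P) (mn (v c0) k).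
Proof.
move=> hk.
have cf j : (c1 *: 'X + c0%:P)`_j = c1 * (j == 1)%N%:R + c0 * (j == 0)%N%:R.
  by rewrite coefD coefZ coefX coefC; case: (j == 0)%N; rewrite ?mulr1 ?mulr0.
rewrite /mn; case: ifP => hle.
- have [r hr] : exists r, v c0 = r%:E.
    case E: (v c0) => [r||]; first by exists r.
    by rewrite E in hle.
    by have := vNy c0; rewrite E.
  rewrite hr /=; split; last by exists 0%N; rewrite cf /= mulr0 add0r mulr1 hr.
  case=> [|[|j]]; rewrite cf /=.
  + by rewrite mulr0 add0r mulr1 hr.
  + by rewrite mulr1 mulr0 addr0 hk -hr.
  + by rewrite !mulr0 addr0 v0 leey.
- split; last by exists 1%N; rewrite cf /= mulr0 addr0 mulr1.
  case=> [|[|j]]; rewrite cf /=.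
  + by rewrite mulr0 add0r mulr1; move/negbT: hle; rewrite -ltNge => /ltW.
  + by rewrite mulr1 mulr0 addr0 hk.
  + by rewrite !mulr0 addr0 v0 leey.
Qed.
End Val.


Section Alg.
Context (p : nat) {R : realType} {K : closedFieldType} (v : K -> \bar R) (Qp : {pred K}).
Hypothesis hv : is_padic_closure p v Qp.

Let v0 : v 0 = +oo%E. Proof. by case: hv => -[]. Qed.
Let vfin : forall x : K, x != 0 -> exists r : R, v x = r%:E. Proof. by case: hv => -[]. Qed.
Let vM : forall x y : K, v (x * y) = (v x + v y)%E. Proof. by case: hv => -[]. Qed.
Let vD : forall x y : K, (Order.min (v x) (v y) <= v (x + y)%R)%E. Proof. by case: hv => -[]. Qed.
Let Q1 : 1 \in Qp. Proof. by case: hv => _ [? ? ? ? ?]. Qed.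
Let QB x y : x \in Qp -> y \in Qp -> x - y \in Qp. Proof. by case: hv => _ [? ? ? ? ?]; auto. Qed.
Let QM x y : x \in Qp -> y \in Qp -> x * y \in Qp. Proof. by case: hv => _ [? ? ? ? ?]; auto. Qed.
Let vint x : x \in Qp -> x != 0 -> exists n : int, v x = (n%:~R : R)%:E.
Proof. by case: hv => _ _ _ [? ? ? ?]; auto. Qed.
Let vp : v p%:R = 1%E. Proof. by case: hv => _ _ _ [? ? ? ?]; auto. Qed.

Definition S x := (x \in Qp) && (0 <= v x)%E.

Lemma S1 : S 1. Proof. by rewrite /S Q1 (v1 v vfin vM) /= lexx. Qed.
Lemma SB x y : S x -> S y -> S (x - y).
Proof.
move=> /andP[a b] /andP[c d]; rewrite /S QB //=.
apply: le_trans (vB v vfin vM vD x y).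
by rewrite /Order.min; case: ifP.
Qed.
Lemma S0 : S 0. Proof. by rewrite -(subrr 1); apply: SB; exact: S1. Qed.
Lemma SN x : S x -> S (- x). Proof. by move=> h; rewrite -sub0r; apply: SB => //; exact: S0. Qed.
Lemma SD x y : S x -> S y -> S (x + y).
Proof. by move=> hx hy; rewrite -(opprK y); apply: SB => //; apply: SN. Qed.
Lemma SM x y : S x -> S y -> S (x * y).
Proof. by move=> /andP[a b] /andP[c d]; rewrite /S QM //= vM adde_ge0. Qed.
Lemma Snat n : S n%:R.
Proof. elim: n => [|n IH]; first exact: S0. by rewrite -natr1; apply: SD => //; exact: S1. Qed.
Lemma Sint (z : int) : S z%:~R.
Proof. by case: z => n; [exact: Snat| rewrite NegzE mulrNz; apply: SN; exact: Snat]. Qed.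

Lemma Sexp x n : S x -> S (x ^+ n).
Proof. by move=> hx; elim: n => [|n IH]; [rewrite expr0; exact: S1| rewrite exprS; apply: SM]. Qed.

Definition allS (f : {poly K}) := forall j, S f`_j.

Lemma allS_sum (I : Type) (s : seq I) (F : I -> {poly K}) :
  (forall i, allS (F i)) -> allS (\sum_(i <- s) F i).
Proof.
move=> h j; rewrite coef_sum; apply: (big_ind S) => //; first exact: S0.
exact: SD. by move=> i _; apply: h.
Qed.

Lemma allS_mul f g : allS f -> allS g -> allS (f * g).
Proof.
move=> hf hg j; rewrite coefM; apply: (big_ind S) => //; first exact: S0.
- exact: SD.
- by move=> i _; apply: SM.
Qed.

Lemma allS_1 : allS 1.
Proof. by move=> j; rewrite coef1; case: (j == 0)%N; [exact: S1|exact: S0]. Qed.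

Lemma allS_exp f n : allS f -> allS (f ^+ n).
Proof.
move=> hf; elim: n => [|n IH]; first exact: allS_1.
by rewrite exprS; apply: allS_mul.
Qed.

Lemma allS_Z c f : S c -> allS f -> allS (c *: f).
Proof. by move=> hc hf j; rewrite coefZ; apply: SM. Qed.

Lemma allS_comp g q : allS g -> allS q -> allS (g \Po q).
Proof.
move=> hg hq; rewrite comp_polyE; apply: allS_sum => i.
by apply: allS_Z => //; apply: allS_exp.
Qed.

Lemma allS_lin c1 c0 : S c1 -> S c0 -> allS (c1 *: 'X + c0%:P).
Proof.
move=> h1 h0 j; rewrite coefD coefZ coefX coefC.
apply: SD; first by apply: SM => //; case: (j == 1)%N; [exact: S1|exact: S0].
by case: (j == 0)%N => //; exact: S0.
Qed.

Lemma gn_int f r : gn v f r -> allS f -> exists n : nat, r = n%:R.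
Proof.
move=> [_ [j hj]] hS; have /andP[hq hge] := hS j.
have nz : f`_j != 0 by apply/eqP => e; move: hj; rewrite e v0.
have [z hz] := vint _ hq nz.
move: hge; rewrite hj => hge; move: hj; rewrite hz => -[] e; move: hge; rewrite -e lee_fin ler0z.
by clear e hz; case: z => // n _; exists n.
Qed.

Lemma comp_prod (rs : seq K) q :
  (\prod_(d <- rs) ('X - d%:P)) \Po q = \prod_(d <- rs) (q - d%:P).
Proof.
elim: rs => [|d rs IH]; first by rewrite !big_nil comp_polyC.
by rewrite !big_cons comp_polyM comp_polyB comp_polyX comp_polyC IH.
Qed.

Lemma Fint (h : {poly int}) (rs : seq K) (m : K) :
  map_poly intr h = \prod_(d <- rs) ('X - d%:P) -> S m ->
  forall k : nat, exists n : nat, \sum_(d <- rs) mn (v (m - d)) k%:R = n%:R.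
Proof.
move=> hh hm k.
pose q := (p%:R ^+ k : K) *: 'X + m%:P.
have vpk : v (p%:R ^+ k) = (k%:R * 1)%:E by apply: (vexp v vfin vM).
have eG : \prod_(d <- rs) (q - d%:P) = \prod_(d <- rs) ((p%:R ^+ k : K) *: 'X + (m - d)%:P).
  by apply: eq_bigr => d _; rewrite /q polyCB addrA.
have gG : gn v (\prod_(d <- rs) (q - d%:P)) (\sum_(d <- rs) mn (v (m - d)) k%:R).
  rewrite eG; apply: (gn_prod v v0 vfin vM vD) => d.
  by apply: (gn_lin v v0 vfin); rewrite vpk mulr1.
apply: (gn_int _ _ gG).
rewrite -comp_prod -hh; apply: allS_comp.
- by move=> j; rewrite coef_map /=; exact: Sint.
- by apply: allS_lin => //; apply: Sexp; exact: Snat.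
Qed.

Lemma sum_le_term (rs : seq K) (f : K -> R) d :
  (forall i, f i <= 0) -> d \in rs -> \sum_(i <- rs) f i <= f d.
Proof.
move=> h; elim: rs => [//|d' rs IH]; rewrite in_cons big_cons => /orP[/eqP <-|hd].
- rewrite gerDl; apply: sumr_le0 => i _; exact: h.
- by apply: le_trans (IH hd); rewrite gerDr.
Qed.

Lemma vpos (h : {poly int}) (rs : seq K) (m : K) :
  map_poly intr h = \prod_(d <- rs) ('X - d%:P) -> S m ->
  forall d, d \in rs -> (0 <= v (m - d))%E.
Proof.
move=> hh hm d hd.
have [n hn] := Fint _ _ _ hh hm 0.
have hle i : mn (v (m - i)) 0%:R <= 0.
  rewrite /mn; case: ifP => //.
  by move: (vNy v v0 vfin (m - i)); case: (v (m - i)).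
have := sum_le_term _ _ _ hle hd; rewrite hn.
rewrite /mn; case: ifP; last by move=> /negbT; rewrite -ltNge => /ltW.
move: (vNy v v0 vfin (m - d)); case: (v (m - d)) => // r _ _ /= hr.
rewrite lee_fin; apply: le_trans hr; exact: ler0n.
Qed.

Lemma vhm (h : {poly int}) (rs : seq K) (m : K) :
  map_poly intr h = \prod_(d <- rs) ('X - d%:P) ->
  v (map_poly intr h).[m] = (\sum_(d <- rs) v (m - d))%E.
Proof.
move=> hh; rewrite hh horner_prod (vprod v vfin vM).
by apply: eq_bigr => d _; rewrite hornerXsubC.
Qed.
End Alg.


Lemma cc_mn {R : realType} (a : \bar R) (x : R) : a != -oo%E ->
  cc a x = mn a x - mn a (x - 1).
Proof.
rewrite /cc /mn; case: a => [r||] //= _.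
- rewrite !lee_fin.
  have [h1|h1] := lerP r (x - 1); have [h2|h2] := lerP r x;
  have [h3|h3] := lerP r (x - 1 - 1); rewrite /=; lra.
- by lra.
Qed.

Lemma cc_ge0 {R : realType} (a : \bar R) (x : R) : 0 <= cc a x.
Proof.
rewrite /cc; case: a => [r||] //=.
have [h1|h1] := lerP r (x - 1); have [h2|h2] := lerP r x; lra.
Qed.

Lemma cc_anti {R : realType} (a : \bar R) (x y : R) : x <= y -> cc a y <= cc a x.
Proof.
move=> hxy; rewrite /cc; case: a => [r||] //=.
have [h1|h1] := lerP r (y - 1); have [h2|h2] := lerP r y;
have [h3|h3] := lerP r (x - 1); have [h4|h4] := lerP r x; lra.
Qed.

Lemma chihat_eq {R : realType} {K : fieldType} (v : K -> \bar R) rs m (t : R) :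
  chihat v rs m t = (\sum_(d <- rs) cc (v (m - d)) (Num.ceil t)%:~R)%:E.
Proof.
rewrite /chihat intrB /=.
rewrite (int_count _ rs (fun d => v (m - d))); last exact: measurable_itv.
rewrite -sumEFin; apply: eq_bigr => d _; exact: meas_cc.
Qed.

Lemma ser_root {R : realType} (a : \bar R) : (0 <= a)%E ->
  (\sum_(1 <= k <oo) (cc a k%:R)%:E)%E = a.
Proof.
case: a => [r||] // r0.
- have ps n : \sum_(1 <= k < n.+1) cc r%:E k%:R = mn r%:E n%:R.
    elim: n => [|n IH].
      rewrite big_geq // /mn lee_fin; case: ifP => //= h; rewrite lee_fin in r0; lra.
    by rewrite big_nat_recr // IH cc_mn // -natr1 addrK /= addrC subrK.
  apply: lim_near_cst; first exact: ereal_hausdorff.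
  exists (Num.Def.truncn r).+2 => // n /= hn.
  have -> : n = n.-1.+1 by lia.
  rewrite sumEFin ps /mn lee_fin ifT //.
  have := Num.Theory.real_truncnS_gt (num_real r).
  move=> h; apply: (le_trans (ltW h)); rewrite ler_nat; lia.
- apply/eqyP => A A0.
  apply: le_trans (nneseries_lim_ge (Num.Def.truncn A).+2 _); last by move=> n _ _; rewrite lee_fin.
  rewrite sumEFin /= sumr_const_nat lee_fin subn1 /=.
  have := Num.Theory.real_truncnS_gt (num_real A); move=> h; rewrite ltW //.
Qed.


Theorem mainTheorem13 (p : nat) (R : realType) (K : closedFieldType)
    (v : K -> \bar R) (Qp : {pred K})
    (h : {poly int}) (rs : seq K) (m : K) :
  prime p ->
  is_padic_closure p v Qp ->
  h \is monic ->
  map_poly intr h = \prod_(d <- rs) ('X - d%:P) ->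
  m \in Qp -> (0 <= v m)%E ->
  [/\ (forall t : R, 0 < t -> exists n : nat, chihat v rs m t = (n%:R : R)%R%:E),
      (forall s t : R, 0 < s -> s <= t -> (chihat v rs m t <= chihat v rs m s)%E) &
      (v (map_poly intr h).[m]
         = (\int[@lebesgue_measure R]_(t in `[0%R : R, +oo[) ((chi v rs m t)%:R : R)%R%:E)%E
       /\ v (map_poly intr h).[m]
         = (\sum_(1 <= k <oo) chihat v rs m k%:R)%E)].
Proof.
move=> _ hv _ hh mQ m0.
have hS : S v Qp m by rewrite /S mQ m0.
have v0 : v 0 = +oo%E by case: hv => -[].
have vfin : forall x : K, x != 0 -> exists r : R, v x = r%:E by case: hv => -[].
have vNy' d : v (m - d) != -oo%E by apply: (vNy v v0 vfin).
have pos := vpos _ _ _ hv _ _ _ hh hS.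
split.
- move=> t t0; rewrite chihat_eq.
  have : (0 < Num.ceil t)%R by rewrite ceil_gt0.
  case E: (Num.ceil t) => [n|//] n0.
  have n1 : (1 <= n)%N by rewrite -(ltz_nat 0 n).
  have -> : ((Posz n)%:~R : R) = n%:R by [].
  under eq_bigr do rewrite cc_mn //.
  rewrite sumrB -(natrB _ n1) subn1.
  have [N1 e1] := Fint _ _ _ hv _ _ _ hh hS n.
  have [N0 e0] := Fint _ _ _ hv _ _ _ hh hS n.-1.
  rewrite e1 e0.
  have hle : (N0 <= N1)%N.
    rewrite -(ler_nat R) -e1 -e0 -subr_ge0 -sumrB; apply: sumr_ge0 => d _.
    have -> : (n%:R : R) = n.-1%:R + 1 by rewrite natr1 prednK.
    have := cc_ge0 (v (m - d)) (n.-1%:R + 1); rewrite cc_mn // addrK; exact.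
  by exists (N1 - N0)%N; rewrite natrB.
- move=> s t s0 st; rewrite !chihat_eq lee_fin; apply: ler_sum => d _.
  by apply: cc_anti; rewrite ler_int le_ceil.
split.
- rewrite (vhm _ _ _ hv _ _ _ hh) /chi (int_count _ rs (fun d => v (m - d))); last exact: measurable_itv.
  by apply: eq_big_seq => d hd; rewrite meas_inf // pos.
- rewrite (vhm _ _ _ hv _ _ _ hh).
  rewrite (eq_eseriesr (g := fun k => \sum_(d <- rs) (cc (v (m - d)) k%:R)%:E)); last first.
    move=> k _; rewrite chihat_eq sumEFin.
    have -> : Num.ceil (k%:R : R) = k%:Z by rewrite -[k%:R]/((k%:Z)%:~R : R) intrKceil.
    by [].
  rewrite nneseries_sum; last by move=> i j _; rewrite lee_fin cc_ge0.
  by apply: eq_big_seq => d hd; rewrite ser_root // pos.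
Qed.
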